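(* Let $R\in\mathbb R$ and let $f:[0,R)\to\mathbb R$ be continuously differentiable and satisfy (h1) $f(0)>0$, $f'(0)=-1$; (h2) $f'$ is strictly increasing and convex; (h3) $f(t)<0$ for some $t\in(0,R)$. Let $e_f(v,t):=f(v)-[f(t)+f'(t)(v-t)]$ for $t,v\in[0,R)$. If $0\le b\le t$, $0\le a\le s$ and $t+s<R$, then \[e_f(a+b,b)\le e_f(t+s,t),\] and, if $s\neq0$, \[e_f(a+b,b)\le\frac12\,\frac{f'(t+s)-f'(t)}{s}\,a^2.\] *)

(* Defs.v *)
From Stdlib Require Import Reals Lra.
Open Scope R_scope.

Definition deriv_on (f df : R -> R) (Rad : R) : Prop :=
  forall t, 0 <= t < Rad ->
    forall eps, 0 < eps -> exists delta, 0 < delta /\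
      forall v, 0 <= v < Rad -> Rabs (v - t) < delta ->
        Rabs (f v - f t - df t * (v - t)) <= eps * Rabs (v - t).

Definition cont_on (g : R -> R) (Rad : R) : Prop :=
  forall t, 0 <= t < Rad ->
    forall eps, 0 < eps -> exists delta, 0 < delta /\
      forall v, 0 <= v < Rad -> Rabs (v - t) < delta -> Rabs (g v - g t) < eps.

Definition strict_incr_on (g : R -> R) (Rad : R) : Prop :=
  forall x y, 0 <= x < Rad -> 0 <= y < Rad -> x < y -> g x < g y.

Definition convex_on (g : R -> R) (Rad : R) : Prop :=
  forall x y l, 0 <= x < Rad -> 0 <= y < Rad -> 0 <= l <= 1 ->
    g (l * x + (1 - l) * y) <= l * g x + (1 - l) * g y.

Definition ef (f df : R -> R) (v t : R) : R := f v - (f t + df t * (v - t)).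

(* Main.v *)
Require Import Defs.
From Stdlib Require Import Reals Lra.
Open Scope R_scope.

Lemma dminus f g x l1 l2 : derivable_pt_lim f x l1 -> derivable_pt_lim g x l2 ->
  derivable_pt_lim (fun y => f y - g y) x (l1 - l2).
Proof. intros; exact (derivable_pt_lim_minus f g x l1 l2 H H0). Qed.
Lemma dconst c x : derivable_pt_lim (fun _ => c) x 0.
Proof. exact (derivable_pt_lim_const c x). Qed.
Lemma dlin c x : derivable_pt_lim (fun y => c * y) x (c * 1).
Proof. exact (derivable_pt_lim_scal id c x 1 (derivable_pt_lim_id x)). Qed.
Lemma dsq c x : derivable_pt_lim (fun y => c * y ^ 2) x (c * (INR 2 * x ^ 1)).
Proof. exact (derivable_pt_lim_scal (fun y => y ^ 2) c x _ (derivable_pt_lim_pow x 2)). Qed.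
Lemma deq f x l l' : derivable_pt_lim f x l -> l = l' -> derivable_pt_lim f x l'.
Proof. intros; subst; auto. Qed.
Lemma dshift F DF b x : derivable_pt_lim F (b+x) (DF (b+x)) ->
  derivable_pt_lim (fun y => F (b+y)) x (DF (b+x)).
Proof. intros H eps He; destruct (H eps He) as [d Hd]; exists d; intros h H1 H2.
  replace (b+(x+h)) with ((b+x)+h) by ring; apply Hd; auto. Qed.

Lemma nonpos G G' p q : p <= q -> (forall c, p<=c<=q -> derivable_pt_lim G c (G' c)) ->
  (forall c, p<=c<=q -> G' c <= 0) -> G q <= G p.
Proof.
  intros Hpq HD HN. destruct Hpq as [Hlt|Heq]; [|subst; lra].
  destruct (MVT_cor2 G G' p q Hlt HD) as [c [E Hc]].
  assert (G' c <= 0) by (apply HN; lra). nra.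
Qed.

Lemma quot A l h eps : h <> 0 -> Rabs (A - l*h) < eps * Rabs h -> Rabs (A/h - l) < eps.
Proof.
  intros Hh H. replace (A/h - l) with ((A - l*h) * / h) by (field; auto).
  rewrite Rabs_mult, Rabs_inv. assert (0 < Rabs h) by (apply Rabs_pos_lt; auto).
  apply (Rmult_lt_reg_r (Rabs h)); auto. rewrite Rmult_assoc, Rinv_l; lra.
Qed.

Definition Fe (f df : R -> R) x := if Rle_dec 0 x then f x else f 0 + df 0 * x.
Definition DFe (df : R -> R) x := if Rle_dec 0 x then df x else df 0.

Lemma Fe_deriv Rad f df : deriv_on f df Rad -> cont_on df Rad ->
  forall x, x < Rad -> derivable_pt_lim (Fe f df) x (DFe df x).
Proof.
  intros Hd Hc x Hx eps He. unfold Fe, DFe.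
  destruct (Rle_dec 0 x) as [H0|H0].
  - destruct (Hd x (conj H0 Hx) (eps/2)) as [d1 [Hd1 P1]]; [lra|].
    destruct (Hc x (conj H0 Hx) (eps/2)) as [d2 [Hd2 P2]]; [lra|].
    assert (Hm : 0 < Rmin d1 (Rmin d2 (Rad - x))) by
      (repeat apply Rmin_pos; lra).
    exists (mkposreal _ Hm). simpl. intros h Hh Hhd.
    pose proof (Rmin_l d1 (Rmin d2 (Rad - x))) as m1.
    pose proof (Rmin_r d1 (Rmin d2 (Rad - x))) as m2.
    pose proof (Rmin_l d2 (Rad - x)) as m3.
    pose proof (Rmin_r d2 (Rad - x)) as m4.
    assert (0 < Rabs h) by (apply Rabs_pos_lt; auto).
    apply quot; auto.
    destruct (Rle_dec 0 (x+h)) as [H1|H1].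
    + assert (Rabs (f (x+h) - f x - df x * (x+h-x)) <= eps/2 * Rabs (x+h-x)).
      { apply P1. split; auto. pose proof (Rle_abs h). lra.
        replace (x+h-x) with h by ring; lra. }
      replace (x+h-x) with h in H2 by ring. nra.
    + assert (hneg : h < 0) by lra.
      rewrite (Rabs_left h) in * by lra.
      assert (Rabs (f 0 - f x - df x * (0-x)) <= eps/2 * Rabs (0-x)).
      { apply P1. lra. rewrite Rabs_left1 by lra. lra. }
      assert (Rabs (df 0 - df x) < eps/2).
      { apply P2. lra. rewrite Rabs_left1 by lra. lra. }
      rewrite (Rabs_left1 (0-x)) in H2 by lra.
      replace (f 0 + df 0 * (x + h) - f x - df x * h) with
        ((f 0 - f x - df x * (0-x)) + (df 0 - df x) * (x+h)) by ring.
      eapply Rle_lt_trans. apply Rabs_triang.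
      rewrite Rabs_mult. rewrite (Rabs_left1 (x+h)) by lra.
      assert (Rabs (df 0 - df x) * - (x+h) <= eps/2 * (-h)).
      { apply Rmult_le_compat; try lra. apply Rabs_pos. }
      nra.
  - exists (mkposreal (-x) ltac:(lra)). simpl. intros h Hh Hhd.
    destruct (Rle_dec 0 (x+h)).
    + exfalso. revert Hhd; unfold Rabs; destruct Rcase_abs; lra.
    + replace ((f 0 + df 0 * (x + h) - (f 0 + df 0 * x)) / h - df 0) with 0 by (field; auto).
      rewrite Rabs_R0; lra.
Qed.
Lemma claimA Rad df : convex_on df Rad -> forall b t u, 0<=b<=t -> 0<=u -> t+u<Rad ->
  df (b+u) + df t <= df b + df (t+u).
Proof.
  intros Hcv b t u Hb Hu Ht.
  destruct (Req_dec u 0) as [E|E].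
  { subst. rewrite !Rplus_0_r. lra. }
  set (D := t+u-b). assert (HD : 0 < D) by (unfold D; lra). assert (HDd : D = t+u-b) by reflexivity. clearbody D.
  set (L := (t-b)/D). assert (HL : L*D = t-b) by (unfold L; field; lra). clearbody L.
  assert (L0 : 0 <= L) by nra. assert (L1 : L <= 1) by nra.
  pose proof (Hcv b (t+u) L ltac:(lra) ltac:(lra) ltac:(lra)) as C1.
  pose proof (Hcv b (t+u) (1-L) ltac:(lra) ltac:(lra) ltac:(lra)) as C2.
  replace (L*b + (1-L)*(t+u)) with (b+u) in C1 by (nra).
  replace ((1-L)*b + (1-(1-L))*(t+u)) with t in C2 by (nra).
  lra.
Qed.

Lemma claimB Rad df : convex_on df Rad -> forall t s x, 0<=t -> 0<s -> 0<=x<=s -> t+s<Rad ->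
  df (t+x) - df t <= (df (t+s) - df t)/s * x.
Proof.
  intros Hcv t s x Ht Hs Hx Hts.
  set (L := x/s). assert (HL : L*s = x) by (unfold L; field; lra). clearbody L.
  assert (L0 : 0 <= L) by nra. assert (L1 : L <= 1) by nra.
  pose proof (Hcv (t+s) t L ltac:(lra) ltac:(lra) ltac:(lra)) as C1.
  replace (L*(t+s) + (1-L)*t) with (t+x) in C1 by nra.
  replace ((df (t+s) - df t)/s * x) with (L * (df (t+s) - df t)) by (rewrite <- HL; field; lra).
  lra.
Qed.

Theorem lemma3p3 (Rad : R) (f df : R -> R)
  (Hd : deriv_on f df Rad) (Hc : cont_on df Rad)
  (h1a : f 0 > 0) (h1b : df 0 = -1)
  (h2a : strict_incr_on df Rad) (h2b : convex_on df Rad)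
  (h3 : exists t, 0 < t < Rad /\ f t < 0)
  (a b s t : R)
  (Hb : 0 <= b <= t) (Ha : 0 <= a <= s) (Hts : t + s < Rad) :
  ef f df (a + b) b <= ef f df (t + s) t /\
  (s <> 0 -> ef f df (a + b) b <= 1 / 2 * ((df (t + s) - df t) / s) * a ^ 2).
Proof.
  assert (FE : forall x, 0 <= x -> Fe f df x = f x).
  { intros x Hx; unfold Fe; destruct Rle_dec; [auto|lra]. }
  assert (DE : forall x, 0 <= x -> DFe df x = df x).
  { intros x Hx; unfold DFe; destruct Rle_dec; [auto|lra]. }
  assert (FD : forall x, x < Rad -> derivable_pt_lim (Fe f df) x (DFe df x))
    by (apply Fe_deriv; auto).
  set (F := Fe f df) in *. set (DF := DFe df) in *.
  assert (P1 : ef f df (a+b) b <= ef f df (t+a) t).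
  { pose (G := fun y => ((F(b+y) - F b) - df b * y) - ((F(t+y) - F t) - df t * y)).
    assert (G a <= G 0).
    { apply (nonpos G (fun c => ((DF(b+c) - 0) - df b*1) - ((DF(t+c)-0) - df t*1))).
      - lra.
      - intros c Hc0. unfold G. repeat apply dminus;
          try apply dshift; try apply FD; try apply dconst; try apply dlin; lra.
      - intros c Hc0. rewrite !DE by lra.
        pose proof (claimA Rad df h2b b t c Hb ltac:(lra) ltac:(lra)). lra. }
    unfold G in H. unfold ef. rewrite !Rplus_0_r, !FE in H by lra.
    replace (a+b) with (b+a) by ring. replace (b+a-b) with a by ring.
    replace (t+a-t) with a by ring. lra. }
  assert (P2 : ef f df (t+a) t <= ef f df (t+s) t).
  { pose (G := fun y => df t * y - (F(t+y) - F t)).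
    assert (G s <= G a).
    { apply (nonpos G (fun c => df t * 1 - (DF(t+c) - 0))).
      - lra.
      - intros c Hc0. unfold G. repeat apply dminus;
          try apply dshift; try apply FD; try apply dconst; try apply dlin; lra.
      - intros c Hc0. rewrite !DE by lra.
        destruct (Req_dec c 0) as [E|E]. { subst. rewrite Rplus_0_r. lra. }
        pose proof (h2a t (t+c) ltac:(lra) ltac:(lra) ltac:(lra)). lra. }
    unfold G in H. unfold ef. rewrite !FE in H by lra.
    replace (t+a-t) with a by ring. replace (t+s-t) with s by ring. lra. }
  split; [lra|].
  intros Hs0.
  assert (Hs : 0 < s) by lra.
  set (K := (df (t + s) - df t) / s).
  pose (G := fun y => ((F(b+y) - F b) - df b * y) - (1/2*K) * y^2).
  assert (G a <= G 0).
  { apply (nonpos G (fun c => ((DF(b+c) - 0) - df b*1) - (1/2*K) * (INR 2 * c^1))).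
    - lra.
    - intros c Hc0. unfold G. repeat apply dminus;
        try apply dshift; try apply FD; try apply dconst; try apply dlin; try apply dsq; lra.
    - intros c Hc0. rewrite !DE by lra.
      pose proof (claimA Rad df h2b b t c Hb ltac:(lra) ltac:(lra)).
      pose proof (claimB Rad df h2b t s c ltac:(lra) Hs ltac:(lra) Hts).
      fold K in H0. simpl INR. lra. }
  unfold G in H. unfold ef. rewrite !Rplus_0_r, !FE in H by lra.
  replace (a+b) with (b+a) by ring. replace (b+a-b) with a by ring.
  fold K. simpl in H |- *. lra.
Qed.
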